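(* Fix a monomial order on $S$. Let $M\subseteq F$ be the submodule generated by elements $g_1,\dots,g_t,f_1,\dots,f_s\in F$, and let $L=Sg_1+\cdots+Sg_t$. For $k=0,\dots,s$ let $L_k=L+Sf_1+\cdots+Sf_k$. Then, as $\mathbb{K}$-vector spaces, \[ M=L\oplus\bigoplus_{i=1}^s f_i\cdot N_{L_{i-1}:f_i}. \]
   Context: Standing notation. $S=\mathbb{K}[x_1,\dots,x_n]$ and $F=Se_1\oplus\cdots\oplus Se_m$ is a free $S$-module. For a submodule $L'\subseteq F$ and $f\in F$, $L':f=\{p\in S: pf\in L'\}$ is an ideal of $S$. For an ideal $I\subseteq S$ and the fixed monomial order on $S$, $N_I$ is the $\mathbb{K}$-span of the monomials of $S$ not in the initial ideal of $I$. Finally, $f\cdot N_I=\{fp:p\in N_I\}$. *)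

(* Defs.v *)
From HB Require Import structures.
From mathcomp Require Import all_boot all_order all_algebra.
From mathcomp Require Export mpoly.
Set Implicit Arguments. Unset Strict Implicit. Unset Printing Implicit Defensive.
Import Order.TTheory GRing.Theory.
Local Open Scope ring_scope.

Section Defs.
Variables (K : fieldType) (n : nat).
Local Notation S := {mpoly K[n]}.
Local Notation mon := 'X_{1..n}.

(* A monomial order on the monomials of S (identified with exponent vectors):
   a total order, compatible with multiplication of monomials (= addition of
   exponents), which is a well-order. *)
Definition monomial_order (le : rel mon) : Prop :=
  [/\ reflexive le, antisymmetric le, transitive le & total le]
  /\ (forall m1 m2 m : mon, le m1 m2 -> le (m1 + m)%MM (m2 + m)%MM)
  /\ well_founded (fun m1 m2 : mon => (m1 != m2) && le m1 m2).

Definition is_lead_mon (le : rel mon) (p : S) (m : mon) : Prop :=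
  m \in msupp p /\ forall m' : mon, m' \in msupp p -> le m' m.

Definition ideal_gen (G : S -> Prop) : S -> Prop :=
  fun x => exists (k : nat) (c h : 'I_k -> S),
    (forall j, G (h j)) /\ x = \sum_(j < k) c j * h j.

Definition initial_ideal (le : rel mon) (I : S -> Prop) : S -> Prop :=
  ideal_gen (fun q => exists (g : S) (m : mon),
                 [/\ I g, g != 0, is_lead_mon le g m & q = 'X_[m]]).

(* N_I: K-span of the monomials not in the initial ideal of I, i.e. the
   polynomials all of whose monomials lie outside in(I). *)
Definition N_ (le : rel mon) (I : S -> Prop) : S -> Prop :=
  fun p => forall m : mon, m \in msupp p -> ~ initial_ideal le I 'X_[m].

Variable m : nat.
(* The free module F = S e_1 + ... + S e_m, as row vectors. *)
Local Notation F := 'rV[S]_m.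

Definition colon (L' : F -> Prop) (f : F) : S -> Prop :=
  fun p => L' (p *: f).

Definition submod_gen (k : nat) (v : 'I_k -> F) : F -> Prop :=
  fun x => exists a : 'I_k -> S, x = \sum_(j < k) a j *: v j.

Definition submod_gen2 (t s : nat) (g : 'I_t -> F) (f : 'I_s -> F) : F -> Prop :=
  fun x => exists (a : 'I_t -> S) (b : 'I_s -> S),
    x = \sum_(j < t) a j *: g j + \sum_(i < s) b i *: f i.

(* L_k = L + S f_1 + ... + S f_k  (0-based: f j with j < k). *)
Definition Lk (t s : nat) (g : 'I_t -> F) (f : 'I_s -> F) (k : nat) : F -> Prop :=
  fun x => exists (l : F) (b : 'I_s -> S),
    submod_gen g l /\ x = l + \sum_(i < s | (i < k)%N) b i *: f i.

End Defs.

(* Main.v *)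
Require Import Defs.
From HB Require Import structures.
From mathcomp Require Import all_boot all_order all_algebra.
From mathcomp Require Import mpoly.
From Stdlib Require Import Classical Lia.
From mathcomp Require Import zify.
Import GRing.Theory.
Local Open Scope ring_scope.

Lemma top_bad (T : eqType) (le : rel T) (B : T -> Prop) :
  total le -> transitive le -> forall s : seq T,
  (forall x, x \in s -> ~ B x) \/
  exists x, [/\ x \in s, B x & forall y, y \in s -> B y -> le y x].
Proof.
move=> tot tr; elim=> [|a s IH]; first by left.
have leaa : le a a by case/orP: (tot a a).
case: (classic (B a)) => Ba.
- case: IH => [H|[x [xs Bx Hx]]].
  + right; exists a; split; rewrite ?mem_head //.
    move=> y; rewrite in_cons => /orP[/eqP->//|ys By].
    by case: (H y ys By).
  + case/orP: (tot a x) => hax.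
    * right; exists x; split; rewrite ?in_cons ?xs ?orbT //.
      by move=> y; rewrite in_cons => /orP[/eqP->//|ys By]; apply: Hx.
    * right; exists a; split; rewrite ?mem_head //.
      move=> y; rewrite in_cons => /orP[/eqP->//|ys By].
      exact: tr (Hx y ys By) hax.
- case: IH => [H|[x [xs Bx Hx]]].
  + by left=> x; rewrite in_cons => /orP[/eqP->//|]; apply: H.
  + right; exists x; split; rewrite ?in_cons ?xs ?orbT //.
    by move=> y; rewrite in_cons => /orP[/eqP->//|ys By]; apply: Hx.
Qed.

Section NF.
Variables (K : fieldType) (n : nat) (le : rel 'X_{1..n}).
Hypothesis hmo : monomial_order le.
Variable (I : {mpoly K[n]} -> Prop).
Hypotheses (I0 : I 0) (ID : forall a b, I a -> I b -> I (a + b))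
  (IM : forall c a, I a -> I (c * a)).

Let bad m := initial_ideal le I 'X_[m].

Lemma lead_exists m : bad m -> exists g, [/\ I g, g@_m != 0 &
  forall y, y \in msupp g -> le y m].
Proof.
case: hmo => _ [compat _].
case=> k [c [h [Hh E]]].
have: [exists j, (c j * h j)@_m != 0].
  apply: contraT; rewrite negb_exists => /forallP H.
  move: (congr1 (mcoeff m) E); rewrite mcoeffX eqxx raddf_sum big1.
    by move/eqP; rewrite oner_eq0.
  by move=> j _; apply/eqP; move: (H j); rewrite negbK.
case/existsP => j Hj; case: (Hh j) => gj [mj [Igj gj0 [mjin mjmax] hjE]].
rewrite hjE in Hj.
have: m \in msupp (c j * 'X_[mj]) by rewrite mcoeff_msupp.
rewrite (perm_mem (msuppMX _ _)) => /mapP [m'' m''in ->].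
exists (gj * 'X_[m'']); split.
- by rewrite mulrC; apply: IM.
- by rewrite addmC mcoeffMX -mcoeff_msupp.
- move=> y; rewrite (perm_mem (msuppMX _ _)) => /mapP [y' y'in ->].
  rewrite (addmC m'' y'); exact: compat _ _ _ (mjmax _ y'in).
Qed.

Definition decomposable (p : {mpoly K[n]}) :=
  exists q r, [/\ I q, N_ le I r & p = q + r].

Lemma decomp_at m : forall p, m \in msupp p -> bad m ->
  (forall m', m' \in msupp p -> bad m' -> le m' m) -> decomposable p.
Proof.
have [[_ _ tr tot] [compat wf]] := hmo.
elim/(well_founded_ind wf): m => m IH p mp bm Hb.
have [g [Ig gm0 gmax]] := @lead_exists m bm.
set a := p@_m / g@_m.
set p' := p - a *: g.
have Iag : I (a *: g) by rewrite -mul_mpolyC; apply: IM.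
have Hp : p = p' + a *: g by rewrite /p' subrK.
have Hlt : forall y, y \in msupp p' -> bad y -> (y != m) && le y m.
  move=> y yin by_; apply/andP; split.
    apply: contraTneq yin => ->; rewrite mcoeff_msupp negbK.
    by rewrite /p' mcoeffB mcoeffZ /a divfK // subrr.
  have := msuppB_le yin; rewrite mem_cat => /orP[yp|yg]; first exact: Hb.
  apply: gmax; move: yg; rewrite !mcoeff_msupp mcoeffZ.
  by apply: contra => /eqP->; rewrite mulr0.
case: (@top_bad _ le bad tot tr (msupp p')) => [Hn|[y [yin by_ ymax]]].
  by exists (a *: g), p'; split; [exact: Iag | by move=> m' /Hn | by rewrite addrC].
have [q' [r' [Iq' Nr' E']]] := IH y (Hlt y yin by_) p' yin by_ ymax.
exists (q' + a *: g), r'; split => //; first exact: ID.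
by rewrite Hp E' addrAC.
Qed.

Lemma decomp p : decomposable p.
Proof.
have [[_ _ tr tot] _] := hmo.
case: (@top_bad _ le bad tot tr (msupp p)) => [Hn|[y [yin by_ ymax]]].
  by exists 0, p; split; [exact: I0 | by move=> m' /Hn | by rewrite add0r].
exact: decomp_at yin by_ ymax.
Qed.

Lemma N_I0 p : N_ le I p -> I p -> p = 0.
Proof.
have [[_ _ tr tot] _] := hmo.
move=> Np Ip; case: (@top_bad _ le (fun _ => True) tot tr (msupp p)) => [Hn|[y [yin _ ymax]]].
  apply/mpolyP => m'; rewrite raddf0; apply/eqP; rewrite mcoeff_eq0.
  by apply/negP => /Hn.
exfalso; apply: (Np y yin).
exists 1%N, (fun _ => 1), (fun _ => 'X_[y]); split.
  move=> _; exists p, y; split => //.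
  - by apply/eqP => p0; move: yin; rewrite p0 mcoeff_msupp raddf0 eqxx.
  - by split => // m' m'in; apply: ymax.
by rewrite big_ord1 mul1r.
Qed.
End NF.

Lemma ac5 (V : zmodType) (l l0 C R B : V) : l + (l0 + C + R + B) = R + (l + l0 + (B + C)).
Proof. rewrite [RHS]addrC -[l + l0 + _]addrA -addrA; congr (l + _).
by rewrite (addrAC (l0 + C) R B) -(addrA l0 C B) (addrC C B). Qed.

Section Mod.
Variables (K : fieldType) (n m : nat) (le : rel 'X_{1..n}).
Hypothesis hmo : monomial_order le.
Variables (t s : nat) (g : 'I_t -> 'rV[{mpoly K[n]}]_m) (f : 'I_s -> 'rV[{mpoly K[n]}]_m).
Local Notation S := {mpoly K[n]}.

Lemma sg0 : submod_gen g 0.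
Proof. by exists (fun _ => 0); rewrite big1 // => j _; rewrite scale0r. Qed.

Lemma sgD x y : submod_gen g x -> submod_gen g y -> submod_gen g (x + y).
Proof.
case=> a -> [b ->]; exists (fun j => a j + b j).
by rewrite -big_split; apply: eq_bigr => j _; rewrite scalerDl.
Qed.

Lemma sgZ c x : submod_gen g x -> submod_gen g (c *: x).
Proof.
case=> a ->; exists (fun j => c * a j).
by rewrite scaler_sumr; apply: eq_bigr => j _; rewrite scalerA.
Qed.

Lemma sgN x : submod_gen g x -> submod_gen g (- x).
Proof. by move=> h; rewrite -scaleN1r; apply: sgZ. Qed.

Lemma Lk0 k : Lk g f k 0.
Proof.
exists 0, (fun _ => 0); split; first exact: sg0.
by rewrite big1 ?addr0 // => j _; rewrite scale0r.
Qed.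

Lemma LkD k x y : Lk g f k x -> Lk g f k y -> Lk g f k (x + y).
Proof.
case=> l1 [b1 [L1 ->]] [l2 [b2 [L2 ->]]].
exists (l1 + l2), (fun j => b1 j + b2 j); split; first exact: sgD.
rewrite [in RHS](eq_bigr (fun j => b1 j *: f j + b2 j *: f j)) => [|j _]; last by rewrite scalerDl.
by rewrite big_split /= addrACA.
Qed.

Lemma LkZ k c x : Lk g f k x -> Lk g f k (c *: x).
Proof.
case=> l1 [b1 [L1 ->]].
exists (c *: l1), (fun j => c * b1 j); split; first exact: sgZ.
by rewrite scalerDr scaler_sumr; congr (_ + _); apply: eq_bigr => j _; rewrite scalerA.
Qed.

Lemma col0 k v : colon (Lk g f k) v 0.
Proof. by rewrite /colon scale0r; apply: Lk0. Qed.
Lemma colD k v a b : colon (Lk g f k) v a -> colon (Lk g f k) v b -> colon (Lk g f k) v (a + b).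
Proof. by rewrite /colon scalerDl; apply: LkD. Qed.
Lemma colM k v c a : colon (Lk g f k) v a -> colon (Lk g f k) v (c * a).
Proof. by rewrite /colon -scalerA; apply: LkZ. Qed.


Local Notation NN i := (N_ le (colon (Lk g f i) (f i))).

Lemma N0 k v : N_ le (colon (Lk g f k) v) 0.
Proof. by move=> m'; rewrite mcoeff_msupp raddf0 eqxx. Qed.

Lemma span_aux k : forall l (b : 'I_s -> S), submod_gen g l ->
  exists l' (p : 'I_s -> S), [/\ submod_gen g l', (forall i : 'I_s, NN i (p i)),
    (forall i : 'I_s, (k <= i)%N -> p i = 0) &
    l + \sum_(i < s | (i < k)%N) b i *: f i = l' + \sum_(i < s) p i *: f i].
Proof.
elim: k => [|k IH] l b Ll.
  exists l, (fun _ => 0); split => //; first by move=> i; apply: N0.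
  rewrite big1; last by move=> i; rewrite ltn0.
  by rewrite big1 ?addr0 // => i _; rewrite scale0r.
case: (ltnP k s) => hk; last first.
  have [l' [p [Ll' Np Zp Ep]]] := IH l b Ll.
  exists l', p; split => //; first by move=> i hi; apply: Zp; apply: ltnW.
  rewrite -Ep; congr (_ + _); apply: eq_bigl => i.
  have := ltn_ord i; move: hk; move: (nat_of_ord i) => x; clear; lia.
set i0 := Ordinal hk.
have [q [r [Iq Nr Eb]]] := @decomp K n le hmo _ (@col0 k (f i0)) (@colD k (f i0)) (@colM k (f i0)) (b i0).
case: Iq => l0 [c [Ll0 Eq]].
have [l' [p [Ll' Np Zp Ep]]] := IH (l + l0) (fun i => b i + c i) (@sgD l l0 Ll Ll0).
exists l', (fun i => if i == i0 then r else p i); split => //.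
- by move=> i; case: eqP => [->|_]; [exact: Nr | exact: Np].
- move=> i hi; have : i != i0.
    by apply/eqP => E; move: hi; rewrite E /= ltnn.
  by move/negbTE => ->; apply: Zp; apply: ltnW.
have Ep2 : \sum_(i < s) p i *: f i = \sum_(i < s | i != i0) p i *: f i.
  by rewrite (bigD1 i0) //= Zp // scale0r add0r.
rewrite (bigD1 i0) /=; last by rewrite ltnSn.
rewrite (eq_bigl (fun i : 'I_s => (i < k)%N)) => [|i]; last first.
  by rewrite ltnS ltn_neqAle andbC.
rewrite [in RHS](bigD1 i0) //= ?eqxx.
rewrite [in RHS](eq_bigr (fun i => p i *: f i)) => [|i]; last by move/negbTE => ->.
rewrite -Ep2 -[in RHS]addrCA -Ep Eb scalerDl Eq.
rewrite [in RHS](eq_bigr (fun j => b j *: f j + c j *: f j)) => [|j _]; last by rewrite scalerDl.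
rewrite big_split /=.
exact: ac5.
Qed.

Lemma uniq_step l (p : 'I_s -> S) : submod_gen g l -> (forall i : 'I_s, NN i (p i)) ->
  l + \sum_(i < s) p i *: f i = 0 -> forall i : 'I_s,
  (forall j : 'I_s, (i < j)%N -> p j *: f j = 0) -> p i = 0.
Proof.
move=> Ll Np E i Hj.
apply: (@N_I0 K n le hmo _ _ (Np i)).
rewrite (bigID (fun j : 'I_s => (j < i)%N)) /= in E.
have Hi : ~~ (i < i)%N by rewrite ltnn.
rewrite (bigD1 i Hi) /= in E.
have Z : \sum_(j < s | ~~ (j < i)%N && (j != i)) p j *: f j = 0.
  apply: big1 => j /andP [hj hji].
  apply: Hj; have : (nat_of_ord j != nat_of_ord i) by rewrite (inj_eq val_inj).
  by move: hj; rewrite -leqNgt; move: (nat_of_ord j) (nat_of_ord i) => x y; clear; lia.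
rewrite Z in E.
exists (- l), (fun j => - p j); split; first exact: sgN.
rewrite [in RHS](eq_bigr (fun j => - (p j *: f j))) => [|j _]; last by rewrite scaleNr.
rewrite sumrN -opprD.
move/eqP: E; rewrite addr0 addrA addrC addr_eq0 => /eqP ->.
done.
Qed.


End Mod.

Theorem lemma6p2 (K : fieldType) (n m : nat) (le : rel 'X_{1..n})
  (t s : nat) (g : 'I_t -> 'rV[{mpoly K[n]}]_m) (f : 'I_s -> 'rV[{mpoly K[n]}]_m) :
  monomial_order le ->
  let M := submod_gen2 g f in
  let L := submod_gen g in
  let N (i : 'I_s) := N_ le (colon (Lk g f i) (f i)) in
  (forall x, M x <->
     exists (l : 'rV[{mpoly K[n]}]_m) (p : 'I_s -> {mpoly K[n]}),
       [/\ L l, (forall i, N i (p i)) & x = l + \sum_(i < s) p i *: f i])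
  /\
  (forall (l : 'rV[{mpoly K[n]}]_m) (p : 'I_s -> {mpoly K[n]}),
     L l -> (forall i, N i (p i)) ->
     l + \sum_(i < s) p i *: f i = 0 ->
     l = 0 /\ forall i, p i *: f i = 0).
Proof.
move=> hmo M L N; split.
- move=> x; split.
  + case=> a [b ->].
    have La : submod_gen g (\sum_(j < t) a j *: g j) by exists a.
    have [l' [p [Ll' Np Zp Ep]]] := @span_aux K n m le hmo t s g f s _ b La.
    exists l', p; split => //; rewrite -Ep; congr (_ + _).
    by apply: eq_bigl => i; rewrite ltn_ord.
  + by case=> l [p [[a ->] Np ->]]; exists a, p.
- move=> l p Ll Np E.
  have Hall : forall i, p i *: f i = 0.
    suff H : forall d (i : 'I_s), (s <= i + d)%N -> p i *: f i = 0.
      by move=> i; apply: (H s); lia.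
    elim=> [|d IH] i hi; first by have := ltn_ord i; move: hi; clear; lia.
    case: (leqP s (i + d)) => h; first exact: IH.
    have -> : p i = 0; last by rewrite scale0r.
    apply: (@uniq_step K n m le hmo t s g f l p Ll Np E) => j hj; apply: IH.
    by move: h hj hi (ltn_ord j); clear; lia.
  split => //.
  by rewrite big1 ?addr0 in E => // i _; apply: Hall.
Qed.
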